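(* Let $D\subset\mathbb{C}$ be an open disk centered at $0$, $f_1,\dots,f_p:D\to\mathbb{C}$ analytic, $A_1,\dots,A_p\in\mathbb{C}^{n\times n}$ with $M(\lambda)=\sum_{m=1}^pf_m(\lambda)A_m$ satisfying $M(\lambda)^T=M(\lambda)$ on $D$, and $M_j:=M^{(j)}(0)$. Let $\mathbf{C}$, $\mathbf{S}$, $\mathbf{A}$, $\mathbf{B}$, $G_{k+1}$, $F_m$ be as described in the context, and assume the infinite matrix $\mathbf{S}$ is invertible. Let $\mathbf{q}_1$ be an infinite block vector whose only nonzero block is its first block $q_1\in\mathbb{C}^n$. Then Algorithm I (indefinite Lanczos) with starting vector $\mathbf{q}_1$ is applicable to the symmetric infinite problem $\mathbf{S}\mathbf{A}\mathbf{x}=\lambda\mathbf{S}\mathbf{B}\mathbf{x}$, and for every iteration $k$: the vector $\mathbf{q}_k$ has only its first $k$ blocks nonzero, the matrix whose columns are these $k$ blocks equals the matrix $Q_k$ generated by Algorithm II (infinite Lanczos) with starting matrix $Q_1=[q_1]$, and the coefficients $t_{i,j}$ and $\omega_i$ produced by the two algorithms coincide.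
   Context: Definitions. $\mathbf{C}=[c_{i,j}]_{i,j\ge1}$ is the infinite matrix determined by $c_{i,1}=1/(i+1)$ ($i\ge1$), $c_{i-1,j}=\frac{j}{i}c_{i,j-1}$ ($i,j>1$). $\mathbf{S}$ is the infinite block matrix with $n\times n$ blocks $S_{1,1}=I$, $S_{1,j}=S_{j,1}=0$ ($j\ge2$), $S_{i,j}=c_{i-1,j-1}M_{i+j-2}$ ($i,j\ge2$). $\mathbf{A}=\operatorname{diag}(-M_0,I,I,\dots)$. $\mathbf{B}$ has first block row $(M_1,\frac12M_2,\frac13M_3,\dots)$, blocks $\frac1jI$ at positions $(j+1,j)$, zeros elsewhere. $G_{k+1}\in\mathbb{R}^{(k+1)\times(k+1)}$ has $g_{j,1}=g_{1,j}=1/j$ and $g_{i,j}=c_{i-1,j}/j$ for $i,j\ge2$; $F_m\in\mathbb{C}^{(k+1)\times(k+1)}$ has $(i,j)$ entry $f_m^{(i+j-1)}(0)$. $\circ$ is the Hadamard product, $^T$ the non-conjugate transpose. Algorithm I (indefinite Lanczos for a symmetric pencil $\hat A x=\lambda\hat Bx$, here $\hat A=\mathbf{S}\mathbf{A}$, $\hat B=\mathbf{S}\mathbf{B}$): set $q_0=0$, $t_{0,1}=0$, $\omega_1=q_1^T\hat Bq_1$. For $k=1,2,\dots$: $w=\hat A^{-1}\hat Bq_k$; $z=\hat Bw$; $\alpha=z^Tq_k$, $\beta=z^Tq_{k-1}$, $\gamma=z^Tw$; $t_{k,k}=\alpha/\omega_k$, $t_{k-1,k}=\beta/\omega_{k-1}$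 (taken as $0$ when $k=1$); $w_\perp=w-t_{k,k}q_k-t_{k-1,k}q_{k-1}$; $t_{k+1,k}=\|w_\perp\|_2$; $q_{k+1}=w_\perp/t_{k+1,k}$; $\omega_{k+1}=(\gamma-2t_{k,k}\alpha-2t_{k-1,k}\beta+t_{k,k}^2\omega_k+t_{k-1,k}^2\omega_{k-1})/t_{k+1,k}^2$. Algorithm II (infinite Lanczos), with $Q_1\in\mathbb{C}^{n\times1}$: set $Q_0=0$, $t_{0,1}=0$, $\omega_1=Q_1^TM_1Q_1$. For $k=1,2,\dots$, with $Q_k=[\tilde q_1,\dots,\tilde q_k]\in\mathbb{C}^{n\times k}$: compute $w_1=-M_0^{-1}\sum_{j=1}^k\frac{M_j}{j}\tilde q_j$ and $W=w_1e_1^T+Q_kD\in\mathbb{C}^{n\times(k+1)}$, where $D\in\mathbb{R}^{k\times(k+1)}$ has $d_{j,j+1}=1/j$ and zeros elsewhere; compute $Z=\sum_{m=1}^pA_mW(G_{k+1}\circ F_m)$; pad $Q_k$ and $Q_{k-1}$ with zero columns to size $n\times(k+1)$ and compute $\alpha=\operatorname{vec}(Z)^T\operatorname{vec}(Q_k)$, $\beta=\operatorname{vec}(Z)^T\operatorname{vec}(Q_{k-1})$, $\gamma=\operatorname{vec}(Z)^T\operatorname{vec}(W)$; $t_{k,k}=\alpha/\omega_k$, $t_{k-1,k}=\beta/\omega_{k-1}$ ($0$ when $k=1$); $W_\perp=W-t_{k,k}Q_k-t_{k-1,k}Q_{k-1}$; $t_{k+1,k}=\|W_\perp\|_F$; $Q_{k+1}=W_\perp/t_{k+1,k}$;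 $\omega_{k+1}=(\gamma-2t_{k,k}\alpha-2t_{k-1,k}\beta+t_{k,k}^2\omega_k+t_{k-1,k}^2\omega_{k-1})/t_{k+1,k}^2$. *)

(* Defs.v *)
From HB Require Import structures.
From mathcomp Require Import all_boot all_order all_algebra.
From mathcomp Require Import complex.
From mathcomp Require Import boolp classical_sets reals topology normedtype derive.
Set Implicit Arguments.
Unset Strict Implicit.
Unset Printing Implicit Defensive.
Import Order.TTheory GRing.Theory Num.Theory.
Import numFieldNormedType.Exports.
Local Open Scope ring_scope.

(* R[i] seen as a numFieldType, hence a normed field over itself: derivatives
   below are complex derivatives (increments h range over R[i]). *)
Definition CC (R : realType) : numFieldType := R[i].

Definition cdern (R : realType) (j : nat) (f : R[i] -> R[i]) : R[i] -> R[i] :=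
  @derive1n (CC R) (CC R) j f.

Definition cdern_mx (R : realType) (n : nat) (j : nat)
  (F : R[i] -> 'M[R[i]]_n) : R[i] -> 'M[R[i]]_n :=
  @derive1n (CC R) _ j (F : CC R -> 'M[CC R]_n).

Definition cderivable (R : realType) (f : R[i] -> R[i]) (z : R[i]) : Prop :=
  @derivable (CC R) (CC R) (CC R) f z 1.

Definition disk (R : realType) (r : R) : set R[i] :=
  [set z : R[i] | `|z| < (r%:C)%C].

(* f analytic (= holomorphic, i.e. complex differentiable to every order)
   on the open set D *)
Definition analytic_on (R : realType) (D : set R[i]) (f : R[i] -> R[i]) : Prop :=
  forall (j : nat) (z : R[i]), D z -> cderivable (cdern j f) z.

Definition Mfun (R : realType) (n p : nat) (f : 'I_p -> R[i] -> R[i])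
  (A : 'I_p -> 'M[R[i]]_n) (z : R[i]) : 'M[R[i]]_n :=
  \sum_(m < p) f m z *: A m.

(* Infinite block vectors / matrices (blocks indexed from 0: block b is the  *)
(* paper's block b+1).                                                       *)
Section Infinite.
Variables (C : numClosedFieldType) (n : nat).

Definition ivec := nat -> 'cV[C]_n.
Definition imat := nat -> nat -> 'M[C]_n.

Definition izero : ivec := fun _ => 0.

Definition fsupp (x : ivec) : Prop := exists N, forall j, (N <= j)%N -> x j = 0.

Definition supb (x : ivec) : nat :=
  match pselect (fsupp x) with
  | left H => proj1_sig (cid H)
  | right _ => 0%N
  end.

Definition imul (K : imat) (x : ivec) : ivec :=
  fun i => \sum_(j < supb x) K i j *m x j.

Definition idotT (z x : ivec) : C :=
  \sum_(j < supb x) ((z j)^T *m x j) 0 0.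

Definition inorm2 (x : ivec) : C :=
  sqrtC (\sum_(j < supb x) \sum_(r < n) `|x j r 0| ^+ 2).

(* K is injective on finitely supported block vectors
   (our rendering of "the infinite matrix K is invertible") *)
Definition inj_fsupp (K : imat) : Prop :=
  forall x, fsupp x -> imul K x = izero -> x = izero.

(* Algorithm I: indefinite Lanczos for a pencil (Ah, Bh) acting on      *)
(* finitely supported block vectors. w = Ah^{-1} Bh q_k is expressed as *)
(* "w finitely supported and Ah w = Bh q_k".                            *)
Definition lanczosI (Ah Bh : ivec -> ivec) (q1 : ivec)
  (q w : nat -> ivec) (t : nat -> nat -> C) (om : nat -> C) : Prop :=
  [/\ q 0%N = izero, q 1%N = q1, om 1%N = idotT (Bh q1) q1 &
   forall k, (1 <= k)%N ->
     let z := Bh (w k) in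
     let al := idotT z (q k) in
     let be := idotT z (q k.-1) in
     let ga := idotT z (w k) in
     let wp : ivec := fun j => w k j - t k k *: q k j - t k.-1 k *: q k.-1 j in
     [/\ fsupp (w k), Ah (w k) = Bh (q k),
         t k k = al / om k,
         t k.-1 k = (if k == 1%N then 0 else be / om k.-1) &
       [/\ t k.+1 k = inorm2 wp,
         q k.+1 = (fun j => (t k.+1 k)^-1 *: wp j) &
         om k.+1 = (ga - 2 * t k k * al - 2 * t k.-1 k * be
                    + t k k ^+ 2 * om k + t k.-1 k ^+ 2 * om k.-1) / t k.+1 k ^+ 2]]].

End Infinite.

Section Matrices.
Variables (C : numClosedFieldType) (n p : nat).

(* ccoef j i = c_{i,j} (1-based indices i, j >= 1):
   c_{i,1} = 1/(i+1),  c_{i,j} = (j/(i+1)) c_{i+1,j-1}  (j >= 2),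
   i.e. c_{i-1,j} = (j/i) c_{i,j-1}. *)
Fixpoint ccoef (j : nat) (i : nat) {struct j} : C :=
  match j with
  | 0%N => 0
  | j1.+1 =>
      match j1 with
      | 0%N => (i.+1%:R)^-1
      | _ => (j%:R / i.+1%:R) * ccoef j1 i.+1
      end
  end.

Definition cC (i j : nat) : C := ccoef j i.

(* M_ : nat -> 'M_n is the sequence M_j = M^{(j)}(0). Block indices 0-based. *)
Definition Smat (M_ : nat -> 'M[C]_n) : imat C n :=
  fun i j => if (i == 0%N) || (j == 0%N) then
               (if (i == 0%N) && (j == 0%N) then 1%:M else 0)
             else cC i j *: M_ (i + j)%N.

Definition Amat (M_ : nat -> 'M[C]_n) : imat C n :=
  fun i j => if i == j then (if i == 0%N then - M_ 0%N else 1%:M) else 0.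

Definition Bmat (M_ : nat -> 'M[C]_n) : imat C n :=
  fun i j => if i == 0%N then (j.+1%:R)^-1 *: M_ j.+1
             else if i == j.+1 then (j.+1%:R)^-1 *: 1%:M else 0.

(* G_m (0-based entries (a,b) = paper (a+1,b+1)) *)
Definition Gmat (m : nat) : 'M[C]_m :=
  \matrix_(a < m, b < m)
    (if (a : nat) == 0%N then (b.+1%:R)^-1
     else if (b : nat) == 0%N then (a.+1%:R)^-1
     else cC a b.+1 / b.+1%:R).

(* F_m with fd j = f_m^{(j)}(0): paper entry (i,j) = f^{(i+j-1)}(0) *)
Definition Fmat (m : nat) (fd : nat -> C) : 'M[C]_m :=
  \matrix_(a < m, b < m) fd (a + b).+1.

Definition hadamard (r c : nat) (X Y : 'M[C]_(r, c)) : 'M[C]_(r, c) :=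
  \matrix_(i, j) (X i j * Y i j).

Definition vdot (r c : nat) (X Y : 'M[C]_(r, c)) : C :=
  (mxvec X *m (mxvec Y)^T) 0 0.

Definition frob (r c : nat) (X : 'M[C]_(r, c)) : C :=
  sqrtC (\sum_(i < r) \sum_(j < c) `|X i j| ^+ 2).

Definition matof (m : nat) (f : nat -> 'cV[C]_n) : 'M[C]_(n, m) :=
  \matrix_(r < n, c < m) f c r 0.

Definition colsfun (m : nat) (X : 'M[C]_(n, m)) : nat -> 'cV[C]_n :=
  fun c => if insub c is Some i then col i X else 0.

Definition Dmat (k : nat) : 'M[C]_(k, k.+1) :=
  \matrix_(j < k, l < k.+1) (if (l : nat) == j.+1 then (j.+1%:R)^-1 else 0).

Definition e1T (k : nat) : 'M[C]_(1, k.+1) :=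
  \row_(l < k.+1) (if (l : nat) == 0%N then 1 else 0).

(* State before iteration k: columns of Q_{k-1}, Q_k, omega_{k-1},       *)
(* omega_k (columns beyond the width are zero = zero padding).          *)
Record stII := StII { sQp : nat -> 'cV[C]_n; sQ : nat -> 'cV[C]_n;
                      somp : C; som : C }.

Variables (M_ : nat -> 'M[C]_n) (fd : 'I_p -> nat -> C) (A : 'I_p -> 'M[C]_n)
          (q1 : 'cV[C]_n).

(* iteration k: returns ((t_{k,k}, t_{k-1,k}, t_{k+1,k}), next state) *)
Definition stepII (k : nat) (s : stII) : (C * C * C) * stII :=
  let Qk := matof k (sQ s) in
  let Qkpad := matof k.+1 (sQ s) in
  let Qk1pad := matof k.+1 (sQp s) in
  let w1 : 'cV[C]_n :=
    - (invmx (M_ 0%N) *m \sum_(j < k) (j.+1%:R)^-1 *: (M_ j.+1 *m sQ s j)) in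
  let W : 'M[C]_(n, k.+1) := w1 *m e1T k + Qk *m Dmat k in
  let Z : 'M[C]_(n, k.+1) :=
    \sum_(m < p) A m *m W *m hadamard (Gmat k.+1) (Fmat k.+1 (fd m)) in
  let al := vdot Z Qkpad in
  let be := vdot Z Qk1pad in
  let ga := vdot Z W in
  let tkk := al / som s in
  let tk1k := if k == 1%N then 0 else be / somp s in
  let Wp := W - tkk *: Qkpad - tk1k *: Qk1pad in
  let tn := frob Wp in
  let Qn := tn^-1 *: Wp in
  let omn := (ga - 2 * tkk * al - 2 * tk1k * be
              + tkk ^+ 2 * som s + tk1k ^+ 2 * somp s) / tn ^+ 2 in
  ((tkk, tk1k, tn), StII (sQ s) (colsfun Qn) (som s) omn).

Definition initII : stII :=
  StII (fun _ => 0) (fun c => if c == 0%N then q1 else 0) 0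
       ((q1^T *m M_ 1%N *m q1) 0 0).

(* stateII k = state before iteration k.+1 *)
Fixpoint stateII (k : nat) : stII :=
  match k with
  | 0%N => initII
  | k'.+1 => (stepII k (stateII k')).2
  end.

Definition QII (k : nat) : 'M[C]_(n, k) := matof k (sQ (stateII k.-1)).
Definition omII (k : nat) : C := som (stateII k.-1).
Definition outII (k : nat) : C * C * C := (stepII k (stateII k.-1)).1.

Definition tII (i j : nat) : C :=
  let '(tjj, tj1j, tnj) := outII j in
  if i == j then tjj else if i.+1 == j then tj1j
  else if i == j.+1 then tnj else 0.

End Matrices.

(* Main.v *)
Require Import Defs.
From HB Require Import structures.
From mathcomp Require Import all_boot all_order all_algebra.
From mathcomp Require Import complex.
From mathcomp Require Import boolp classical_sets functions reals topology normedtype derive.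
From mathcomp Require Import ring.
Set Implicit Arguments.
Unset Strict Implicit.
Unset Printing Implicit Defensive.
Import Order.TTheory GRing.Theory Num.Theory.
Local Open Scope ring_scope.

Section IV.
Variables (C : numClosedFieldType) (n : nat).
Implicit Types x y : ivec C n.

Definition bnd x (N : nat) := forall j, (N <= j)%N -> x j = 0.

Lemma bnd_fsupp x N : bnd x N -> fsupp x.
Proof. by move=> h; exists N. Qed.

Lemma supbP x : fsupp x -> bnd x (supb x).
Proof.
move=> fx; rewrite /supb; case: pselect => // H.
by case: (cid H) => N HN /=.
Qed.

Lemma bnd_le x N M : bnd x N -> (N <= M)%N -> bnd x M.
Proof. by move=> h le j hj; apply: h; apply: leq_trans hj. Qed.

Lemma sum_widen (V : nmodType) x N M (F : nat -> 'cV[C]_n -> V) :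
  bnd x N -> (N <= M)%N -> (forall j, F j 0 = 0) ->
  \sum_(j < M) F j (x j) = \sum_(j < N) F j (x j).
Proof.
move=> bx le F0; rewrite (big_ord_widen M (fun j => F j (x j)) le).
rewrite [RHS]big_mkcond; apply: eq_bigr => j _.
by case: ifP => // /negbT; rewrite -leqNgt => /bx ->; rewrite F0.
Qed.

Lemma sum_bnd (V : nmodType) x N M (F : nat -> 'cV[C]_n -> V) :
  bnd x N -> bnd x M -> (forall j, F j 0 = 0) ->
  \sum_(j < N) F j (x j) = \sum_(j < M) F j (x j).
Proof.
move=> bN bM F0.
by rewrite -(@sum_widen _ x N (N + M)) ?leq_addr // (@sum_widen _ x M (N + M)) ?leq_addl.
Qed.

Lemma sum_supb (V : nmodType) x N (F : nat -> 'cV[C]_n -> V) :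
  bnd x N -> (forall j, F j 0 = 0) ->
  \sum_(j < supb x) F j (x j) = \sum_(j < N) F j (x j).
Proof. by move=> bN F0; exact: (@sum_bnd V x (supb x) N F (supbP (bnd_fsupp bN)) bN F0). Qed.

Lemma imulE (K : imat C n) x N : bnd x N ->
  imul K x = fun i => \sum_(j < N) K i j *m x j.
Proof.
move=> bx; apply: funext => i; rewrite /imul.
by rewrite (@sum_supb _ x N (fun j v => K i j *m v)) // => j; rewrite mulmx0.
Qed.

Lemma idotTE z x N : bnd x N ->
  idotT z x = \sum_(j < N) ((z j)^T *m x j) 0 0.
Proof.
move=> bx; rewrite /idotT.
by rewrite (@sum_supb _ x N (fun j v => ((z j)^T *m v) 0 0)) // => j; rewrite mulmx0 mxE.
Qed.

Lemma inorm2E x N : bnd x N ->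
  inorm2 x = sqrtC (\sum_(j < N) \sum_(r < n) `|x j r 0| ^+ 2).
Proof.
move=> bx; rewrite /inorm2.
rewrite (@sum_supb _ x N (fun j v => \sum_(r < n) `|v r 0| ^+ 2)) // => j.
by rewrite big1 // => r _; rewrite mxE normr0 expr0n.
Qed.

End IV.
Section MM.
Variables (C : numClosedFieldType) (n : nat).

Lemma vdotE r c (X Y : 'M[C]_(r, c)) :
  vdot X Y = \sum_(i < r) \sum_(j < c) X i j * Y i j.
Proof.
rewrite /vdot mxE (reindex _ (curry_mxvec_bij _ _)) /= pair_bigA /=.
apply: eq_bigr => [[i j]] _ /=.
by rewrite !mxE !mxvecE.
Qed.

Lemma vdot_matof N (x y : nat -> 'cV[C]_n) :
  vdot (matof N x) (matof N y) = \sum_(j < N) ((x j)^T *m y j) 0 0.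
Proof.
rewrite vdotE exchange_big; apply: eq_bigr => j _; rewrite mxE.
by apply: eq_bigr => i _; rewrite !mxE.
Qed.

Lemma frob_matof N (x : nat -> 'cV[C]_n) :
  frob (matof N x) = sqrtC (\sum_(j < N) \sum_(r < n) `|x j r 0| ^+ 2).
Proof.
rewrite /frob exchange_big; congr sqrtC; apply: eq_bigr => j _.
by apply: eq_bigr => i _; rewrite !mxE.
Qed.

Lemma matof_lin N (x y z : nat -> 'cV[C]_n) a b :
  matof N x - a *: matof N y - b *: matof N z =
  matof N (fun j => x j - a *: y j - b *: z j).
Proof. by apply/matrixP => i j; rewrite !mxE. Qed.

Lemma colsfun_matof N (x : nat -> 'cV[C]_n) a :
  (forall j, (N <= j)%N -> x j = 0) ->
  colsfun (a *: matof N x) = fun j => a *: x j.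
Proof.
move=> bx; apply: funext => j; rewrite /colsfun.
case: insubP => [i ij <-|].
  by apply/matrixP => r s; rewrite !mxE (ord1 s).
by rewrite -leqNgt => /bx ->; rewrite scaler0.
Qed.

End MM.
Section CC.
Variables (C : numClosedFieldType).

Lemma fact_neq0 k : (k`!%:R : C) != 0.
Proof. by rewrite pnatr_eq0 -lt0n fact_gt0. Qed.

Lemma Sn_neq0 k : (k.+1%:R : C) != 0.
Proof. by rewrite pnatr_eq0. Qed.

Lemma ccoefE j i :
  ccoef C j.+1 i / j.+1%:R = i`!%:R * j`!%:R / (i + j).+1`!%:R.
Proof.
elim: j i => [|j IH] i.
  rewrite /= addn0 factS natrM divr1 fact0 mulr1.
  have h3 := fact_neq0 i; have h1 := Sn_neq0 i.
  by field; rewrite h3 nat1r h1.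
have -> : ccoef C j.+2 i = j.+2%:R / i.+1%:R * ccoef C j.+1 i.+1 by [].
have IH1 := IH i.+1.
have e : ccoef C j.+1 i.+1 = (i.+1`!%:R * j`!%:R / (i.+1 + j).+1`!%:R) * j.+1%:R.
  by rewrite -IH1 divfK ?Sn_neq0.
rewrite e addSn -addnS.
rewrite !factS !natrM.
have h1 := Sn_neq0 i; have h2 := Sn_neq0 j.+1; have h3 := fact_neq0 i.
by field; rewrite fact_neq0 !nat1r -natrD nat1r -natrD !pnatr_eq0 !addnS /=.
Qed.

Lemma ccoef_sym a b :
  ccoef C b.+1 a / b.+1%:R = ccoef C a.+1 b / a.+1%:R.
Proof. by rewrite !ccoefE addnC; congr (_ / _); rewrite mulrC. Qed.

End CC.
Section Step.
Variables (C : numClosedFieldType) (n p : nat) (M_ : nat -> 'M[C]_n)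
  (fd : 'I_p -> nat -> C) (A : 'I_p -> 'M[C]_n).
Hypothesis hM : forall j, M_ j = \sum_(m < p) fd m j *: A m.
Hypothesis hU : M_ 0%N \in unitmx.
Hypothesis hS : inj_fsupp (Smat M_).

Implicit Types x y : ivec C n.
Arguments ccoef : simpl never.

Lemma imul_pick (K : imat C n) x N i j0 : bnd x N ->
  (forall j, j != j0 -> K i j = 0) -> imul K x i = K i j0 *m x j0.
Proof.
move=> bx hK; have bx' := bnd_le bx (leq_addl j0.+1 N).
rewrite (imulE K bx').
rewrite (eq_bigr (fun j : 'I_(j0.+1 + N) => if (j : nat) == j0 then K i j0 *m x j0 else 0)).
  by rewrite -big_mkcond (big_ord1_eq _ (fun _ => K i j0 *m x j0)) ifT // addSn ltnS leq_addr.
move=> j _; case: eqP => [-> //|/eqP h].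
by rewrite hK ?mul0mx.
Qed.

Lemma imulA x N i : bnd x N -> imul (Amat M_) x i = Amat M_ i i *m x i.
Proof. by move=> bx; apply: (@imul_pick (Amat M_) x N i i bx) => j hj; rewrite /Amat eq_sym (negbTE hj). Qed.

Lemma imulB0 x N : bnd x N ->
  imul (Bmat M_) x 0%N = \sum_(j < N) (j.+1%:R)^-1 *: (M_ j.+1 *m x j).
Proof. by move=> bx; rewrite (imulE _ bx); apply: eq_bigr => j _; rewrite /Bmat /= scalemxAl. Qed.

Lemma imulBS x N i : bnd x N -> imul (Bmat M_) x i.+1 = (i.+1%:R)^-1 *: x i.
Proof.
move=> bx; rewrite (@imul_pick _ x N i.+1 i bx).
  by rewrite /Bmat /= eqxx -scalemxAl mul1mx.
by move=> j hj; rewrite /Bmat /= eqSS eq_sym (negbTE hj).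
Qed.

Lemma imulS0 x N : bnd x N -> imul (Smat M_) x 0%N = x 0%N.
Proof.
move=> bx; rewrite (@imul_pick _ x N 0 0 bx).
  by rewrite /Smat /= mul1mx.
by move=> j hj; rewrite /Smat /= (negbTE hj).
Qed.

Lemma imulSS x N c : bnd x N.+1 ->
  imul (Smat M_) x c.+1 = \sum_(j < N) (cC C c.+1 j.+1 *: M_ (c.+1 + j.+1)%N) *m x j.+1.
Proof.
move=> bx; rewrite (imulE _ bx) big_ord_recl /= {1}/Smat /= mul0mx add0r.
by apply: eq_bigr => j _; rewrite /Smat /=.
Qed.

Lemma imul_sub (K : imat C n) x y : fsupp x -> fsupp y ->
  imul K (fun j => x j - y j) = fun i => imul K x i - imul K y i.
Proof.
move=> fx fy; have bx := supbP fx; have by_ := supbP fy.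
have bx' := bnd_le bx (leq_addr (supb y) (supb x)).
have by' := bnd_le by_ (leq_addl (supb x) (supb y)).
have bd : bnd (fun j => x j - y j) (supb x + supb y).
  by move=> j hj; rewrite bx' // by' // subr0.
rewrite (imulE K bd) (imulE K bx') (imulE K by'); apply: funext => i.
by rewrite -sumrB; apply: eq_bigr => j _; rewrite mulmxBr.
Qed.

Definition w1of k (s : stII C n) : 'cV[C]_n :=
  - (invmx (M_ 0%N) *m \sum_(j < k) (j.+1%:R)^-1 *: (M_ j.+1 *m sQ s j)).

Definition wv k (s : stII C n) : ivec C n :=
  fun j => if j == 0%N then w1of k s else (j%:R)^-1 *: sQ s j.-1.

Lemma wv_bnd k s : bnd (sQ s) k -> bnd (wv k s) k.+1.
Proof.
move=> bq [|j] //= hj; rewrite /wv /= bq ?scaler0 //.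
Qed.

Lemma wv_A k s : bnd (sQ s) k ->
  imul (Amat M_) (wv k s) = imul (Bmat M_) (sQ s).
Proof.
move=> bq; apply: funext => -[|i].
  rewrite (imulA 0 (wv_bnd bq)) (imulB0 bq) /Amat /= /wv /= /w1of.
  by rewrite mulNmx mulmxN opprK mulmxA mulmxV // mul1mx.
rewrite (imulA _ (wv_bnd bq)) (imulBS _ bq) /Amat /= eqxx mul1mx.
by rewrite /wv /=.
Qed.

Lemma imulA_bnd x N : bnd x N -> bnd (imul (Amat M_) x) N.
Proof. by move=> bx j hj; rewrite (imulA _ bx) bx // mulmx0. Qed.

Lemma wv_unique k s w : bnd (sQ s) k -> fsupp w ->
  imul (Smat M_) (imul (Amat M_) w) = imul (Smat M_) (imul (Bmat M_) (sQ s)) ->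
  w = wv k s.
Proof.
move=> bq fw hw; have bw := supbP fw.
have f1 : fsupp (imul (Amat M_) w) := bnd_fsupp (imulA_bnd bw).
have f2 : fsupp (imul (Amat M_) (wv k s)) := bnd_fsupp (imulA_bnd (wv_bnd bq)).
have bw' := bnd_le bw (leq_addr k.+1 (supb w)).
have bv' := bnd_le (wv_bnd bq) (leq_addl (supb w) k.+1).
have fd0 : fsupp (fun j => imul (Amat M_) w j - imul (Amat M_) (wv k s) j).
  by exists (supb w + k.+1)%N => j hj; rewrite (imulA_bnd bw') // (imulA_bnd bv') // subr0.
have hz := hS fd0.
have := hz _; rewrite imul_sub // hw -(wv_A bq).
have -> : (fun i => imul (Smat M_) (imul (Amat M_) (wv k s)) i -
     imul (Smat M_) (imul (Amat M_) (wv k s)) i) = izero C n.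
  by apply: funext => i; rewrite subrr.
move=> /(_ erefl) h0; apply: funext => j.
have := congr1 (fun f => f j) h0; rewrite /izero /= => /eqP; rewrite subr_eq0 => /eqP.
rewrite (imulA _ bw') (imulA _ bv') /Amat eqxx; case: eqP => [-> | _].
  by rewrite !mulNmx => /oppr_inj /(can_inj (mulKmx hU)).
by rewrite !mul1mx.
Qed.


Lemma W_eq k s :
  w1of k s *m e1T C k + matof k (sQ s) *m Dmat C k = matof k.+1 (wv k s).
Proof.
rewrite /wv; move: (w1of k s) => w.
apply/matrixP => r [c hc]; rewrite !mxE big_ord1 !mxE /=.
case: c hc => [|c] hc /=.
  rewrite mulr1 big1 ?addr0 // => j _; rewrite !mxE /=.
  by rewrite mulr0.
rewrite mulr0 add0r.
rewrite (eq_bigr (fun j : 'I_k => if (j : nat) == c then sQ s c r 0 * (c.+1%:R)^-1 else 0)).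
  by rewrite -big_mkcond (big_ord1_eq _ (fun _ => sQ s c r 0 * (c.+1%:R)^-1)) ifT // mxE mulrC.
move=> j _; rewrite !mxE /= eqSS eq_sym; case: eqP => [-> //|]; by rewrite mulr0.
Qed.

Lemma Mv_entry j (v : 'cV[C]_n) r :
  (M_ j *m v) r 0 = \sum_(m < p) fd m j * (A m *m v) r 0.
Proof.
rewrite hM mulmx_suml summxE; apply: eq_bigr => m _.
by rewrite -scalemxAl mxE.
Qed.

Lemma AW_entry m N (x : nat -> 'cV[C]_n) r (l : 'I_N) :
  (A m *m matof N x) r l = (A m *m x l) r 0.
Proof. by rewrite !mxE; apply: eq_bigr => i _; rewrite !mxE. Qed.

Lemma G0 N (l c : 'I_N) : (c : nat) = 0%N -> Gmat C N l c = (l.+1%:R)^-1.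
Proof. by move=> c0; rewrite mxE c0 /=; case: eqP => // ->. Qed.

Lemma GS N (l c : 'I_N) c' : (c : nat) = c'.+1 ->
  Gmat C N l c = cC C c'.+1 l.+1 / l.+1%:R.
Proof.
move=> cS; rewrite mxE cS /=; case: (l : nat) => [|l'] /=.
  by rewrite /cC divr1.
by rewrite /cC -ccoef_sym.
Qed.

Lemma H_entry N m (l c : 'I_N) :
  hadamard (Gmat C N) (Fmat N (fd m)) l c = Gmat C N l c * fd m (l + c).+1.
Proof.
rewrite {1}/hadamard mxE; congr (_ * _).
by rewrite /Fmat mxE.
Qed.

Lemma y_bnd k s : bnd (sQ s) k -> bnd (imul (Bmat M_) (wv k s)) k.+2.
Proof.
move=> bq [|j] // hj; rewrite (imulBS _ (wv_bnd bq)) (wv_bnd bq) ?scaler0 //.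
Qed.

Lemma Z_eq k s : bnd (sQ s) k ->
  \sum_(m < p) A m *m matof k.+1 (wv k s) *m hadamard (Gmat C k.+1) (Fmat k.+1 (fd m))
  = matof k.+1 (imul (Smat M_) (imul (Bmat M_) (wv k s))).
Proof.
move=> bq; have bw := wv_bnd bq; have byy := y_bnd bq.
apply/matrixP => r c; rewrite summxE [RHS]mxE.
under eq_bigr => m _ do rewrite mxE.
under eq_bigr => m _ do under eq_bigr => l _ do rewrite AW_entry H_entry.
rewrite exchange_big /=.
case: c => -[|c] hc.
  rewrite (imulS0 byy) (imulB0 bw) summxE; apply: eq_bigr => l _.
  rewrite [RHS]mxE Mv_entry mulr_sumr; apply: eq_bigr => m _.
  rewrite (G0 _ (c := Ordinal hc)) // addn0; ring.
rewrite (imulSS _ byy) summxE; apply: eq_bigr => l _.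
rewrite (imulBS _ bw) -scalemxAl -scalemxAr [in RHS]mxE [in RHS]mxE Mv_entry !mulr_sumr.
apply: eq_bigr => m _.
have -> : (c.+1 + l.+1)%N = (l + c.+1).+1 by rewrite addnS addnC.
rewrite (GS _ (c := Ordinal hc) (c' := c)) //; ring.
Qed.

Lemma stepE k s : bnd (sQ s) k -> bnd (sQp s) k ->
  stepII M_ fd A k s =
  let z := imul (Smat M_) (imul (Bmat M_) (wv k s)) in
  let al := idotT z (sQ s) in let be := idotT z (sQp s) in
  let ga := idotT z (wv k s) in
  let tkk := al / som s in
  let tk1k := if k == 1%N then 0 else be / somp s in
  let wp : ivec C n := fun j => wv k s j - tkk *: sQ s j - tk1k *: sQp s j in
  let tn := inorm2 wp in
  ((tkk, tk1k, tn), StII (sQ s) (fun j => tn^-1 *: wp j) (som s)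
     ((ga - 2 * tkk * al - 2 * tk1k * be + tkk ^+ 2 * som s + tk1k ^+ 2 * somp s) / tn ^+ 2)).
Proof.
move=> bq bqp; have bw := wv_bnd bq.
have bq1 := bnd_le bq (leqnSn k); have bqp1 := bnd_le bqp (leqnSn k).
rewrite /stepII; cbv zeta.
rewrite -/(w1of k s) W_eq (Z_eq bq) !vdot_matof.
set z := imul (Smat M_) (imul (Bmat M_) (wv k s)).
rewrite -(idotTE z bq1) -(idotTE z bqp1) -(idotTE z bw).
rewrite matof_lin frob_matof.
set wp := (fun j => _ - _ *: sQ s j - _ *: sQp s j).
have bwp : bnd wp k.+1.
  by move=> j hj; rewrite /wp bw // bq1 // bqp1 // !scaler0 !subr0.
rewrite -(inorm2E bwp) colsfun_matof //.
Qed.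

Section Alg.
Variable q1 : 'cV[C]_n.

Local Notation st := (stateII M_ fd A q1).
Arguments stateII : simpl never.
Arguments stepII : simpl never.

Lemma state_bnd k : bnd (sQ (st k)) k.+1 /\ bnd (sQp (st k)) k.+1.
Proof.
elim: k => [|k [b1 b2]].
  by split => -[|j] //.
have -> : st k.+1 = (stepII M_ fd A k.+1 (st k)).2 by [].
rewrite (stepE b1 b2) /=; split; last by apply: bnd_le b1 _.
have bw := wv_bnd b1; have b1' := bnd_le b1 (leqnSn _); have b2' := bnd_le b2 (leqnSn _).
by move=> j hj; rewrite bw // b1' // b2' // !scaler0 !subr0 scaler0.
Qed.

Lemma stS k : st k.+1 = (stepII M_ fd A k.+1 (st k)).2.
Proof. by []. Qed.

Lemma sQp_S k : sQp (st k.+1) = sQ (st k).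
Proof. by have [b1 b2] := state_bnd k; rewrite stS (stepE b1 b2). Qed.

Lemma somp_S k : somp (st k.+1) = som (st k).
Proof. by have [b1 b2] := state_bnd k; rewrite stS (stepE b1 b2). Qed.

Lemma tII_out j a b c : (1 <= j)%N -> outII M_ fd A q1 j = (a, b, c) ->
  [/\ tII M_ fd A q1 j j = a, tII M_ fd A q1 j.-1 j = b & tII M_ fd A q1 j.+1 j = c].
Proof.
case: j => // j _ h; rewrite /tII h /= eqxx; split => //.
  by rewrite (ltn_eqF (ltnSn j)).
by rewrite (gtn_eqF (ltnSn j.+1)) (gtn_eqF (leqW (ltnSn j.+1))) eqxx.
Qed.

Let q1v : ivec C n := fun j => if j == 0%N then q1 else 0.

Lemma om1E :
  idotT (imul (Smat M_) (imul (Bmat M_) q1v)) q1v = (q1^T *m M_ 1%N *m q1) 0 0.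
Proof.
have b1 : bnd q1v 1 by case.
have by2 : bnd (imul (Bmat M_) q1v) 2.
  by move=> [|j] // hj; rewrite (imulBS _ b1) b1 ?scaler0.
rewrite (idotTE _ b1) big_ord1 (imulS0 by2) (imulB0 b1) big_ord1 /q1v /= invr1 scale1r.
rewrite -mulmxA; transitivity ((q1^T *m (M_ 1%N *m q1))^T 0 0); first by rewrite [in RHS]trmx_mul trmxK.
by rewrite mxE.
Qed.

Definition qE (k : nat) : ivec C n := if k is k'.+1 then sQ (st k') else izero C n.
Definition omE (k : nat) : C := if k is k'.+1 then som (st k') else 0.

Arguments qE : simpl never.
Arguments omE : simpl never.

Lemma qE_prev k : qE k = sQp (st k).
Proof. by case: k => [|k] //; rewrite sQp_S. Qed.

Lemma omE_prev k : k != 0%N -> omE k = somp (st k).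
Proof. by case: k => [|k] //; rewrite somp_S. Qed.

Theorem main_exist :
  let Ah := fun x : ivec C n => imul (Smat M_) (imul (Amat M_) x) in
  let Bh := fun x : ivec C n => imul (Smat M_) (imul (Bmat M_) x) in
  let q1v : ivec C n := fun j => if j == 0%N then q1 else 0 in
  exists q w t om, lanczosI Ah Bh q1v q w t om.
Proof.
move=> Ah Bh q1w; rewrite /Ah /Bh /q1w {Ah Bh q1w}.
exists qE, (fun k => wv k (st k.-1)), (tII M_ fd A q1), omE.
split => //; first by rewrite /omE /= om1E.
move=> [|k] // _.
have [b1 b2] := state_bnd k.
have E := stepE b1 b2.
have hout : outII M_ fd A q1 k.+1 = (stepII M_ fd A k.+1 (st k)).1 by [].
rewrite E /= in hout.
have [t1 t2 t3] := tII_out (ltn0Sn k) hout.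
have eq_q : qE k.+1 = sQ (st k) by [].
have eq_qn : qE k.+2 = sQ (st k.+1) by [].
have eq_om : omE k.+1 = som (st k) by [].
have eq_omn : omE k.+2 = som (st k.+1) by [].
rewrite stS E /= in eq_qn eq_omn.
rewrite /= t1 t2 t3 eq_q eq_qn eq_om eq_omn qE_prev.
case: (posnP k) => [k0|kp]; last rewrite (omE_prev (lt0n_neq0 kp)).
  subst k; split; [exact: bnd_fsupp (wv_bnd b1) | by rewrite (wv_A b1) | by [] | by [] | split => //].
split; [exact: bnd_fsupp (wv_bnd b1) | by rewrite (wv_A b1) | by [] | by [] | split => //].
Qed.

Section Uniq.
Variables (q w : nat -> ivec C n) (t : nat -> nat -> C) (om : nat -> C).
Hypothesis HL : lanczosI (fun x : ivec C n => imul (Smat M_) (imul (Amat M_) x))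
  (fun x : ivec C n => imul (Smat M_) (imul (Bmat M_) x))
  (fun j => if j == 0%N then q1 else 0) q w t om.

Definition Inv k := [/\ sQ (st k) = q k.+1, sQp (st k) = q k,
  som (st k) = om k.+1 & (k != 0%N -> somp (st k) = om k)].

Lemma inv_step k : Inv k ->
  [/\ t k.+1 k.+1 = tII M_ fd A q1 k.+1 k.+1, t k k.+1 = tII M_ fd A q1 k k.+1,
      t k.+2 k.+1 = tII M_ fd A q1 k.+2 k.+1 & Inv k.+1].
Proof.
case: HL => q0 q1e om1 H [Q1 Q0 O1 O0].
have [b1 b2] := state_bnd k.
have E := stepE b1 b2.
have hout : outII M_ fd A q1 k.+1 = (stepII M_ fd A k.+1 (st k)).1 by [].
rewrite E /= in hout.
have [t1 t2 t3] := tII_out (ltn0Sn k) hout.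
move: (H k.+1 (ltn0Sn k)); cbv zeta beta.
move=> [fw hA tkk_e tk1k_e [tn_e qn_e omn_e]].
rewrite -Q1 in hA; have wk := wv_unique b1 fw hA.
rewrite wk -Q1 -Q0 -O1 in tkk_e tk1k_e tn_e qn_e omn_e.
have T2 : t k k.+1 = if k.+1 == 1%N then 0 else
    idotT (imul (Smat M_) (imul (Bmat M_) (wv k.+1 (st k)))) (sQp (st k)) / somp (st k).
  rewrite tk1k_e; case: (posnP k) => [->|kp] //.
  by rewrite O0 // lt0n_neq0.
rewrite /= in tkk_e; rewrite t1 t2 t3 tkk_e T2 tn_e tkk_e T2.
split => //; split.
- by rewrite stS E /= qn_e tn_e tkk_e T2.
- by rewrite sQp_S.
- rewrite stS E /= omn_e tn_e tkk_e T2.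
  case: (posnP k) => [k0|kp]; last by rewrite O0 // lt0n_neq0.
  by subst k; rewrite /= !expr0n !mul0r.
- by rewrite somp_S.
Qed.

Lemma inv_all k : Inv k.
Proof.
elim: k => [|k IH]; last by case: (inv_step IH).
case: HL => q0 q1e om1 _; split => //.
by rewrite om1 om1E.
Qed.

Lemma main_uniq k : (1 <= k)%N ->
     [/\ forall j, (k <= j)%N -> q k j = 0,
         \matrix_(a < n, c < k) q k c a 0 = QII M_ fd A q1 k,
         t k k = tII M_ fd A q1 k k,
         t k.-1 k = tII M_ fd A q1 k.-1 k &
         [/\ t k.+1 k = tII M_ fd A q1 k.+1 k & om k = omII M_ fd A q1 k]].
Proof.
case: k => // k _.
have [Q1 Q0 O1 O0] := inv_all k.
have [t1 t2 t3 _] := inv_step (inv_all k).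
have [b1 b2] := state_bnd k.
split => //.
- by rewrite -Q1.
- by rewrite /QII /= -Q1.
Qed.

End Uniq.

End Alg.

End Step.

Module An.
Import numFieldNormedType.Exports.
Section An.
Variables (K : numFieldType) (n : nat).

Lemma deriveZl_mx (g : K -> K) (B : 'M[K]_n) x :
  derivable g x 1 ->
  derivable (fun z => g z *: B) x 1 /\ 'D_1 (fun z => g z *: B) x = 'D_1 g x *: B.
Proof.
move=> dg; have dg' : differentiable g x by apply/derivable1_diffP.
have dG : differentiable (fun z => g z *: B) x by apply: differentiableZl.
split; first exact: diff_derivable.
by rewrite deriveE // diffZl // deriveE.
Qed.

End An.

Lemma M_eq (R : realType) n p (r : R) (f : 'I_p -> R[i] -> R[i]) (A : 'I_p -> 'M[R[i]]_n) :
  (forall m, analytic_on (disk r) (f m)) ->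
  forall j (z : R[i]), disk r z ->
  cdern_mx j (Mfun f A) z = \sum_(m < p) cdern j (f m) z *: A m.
Proof.
move=> an j; elim: j => [|j IH] z hz.
  by rewrite /cdern_mx /cdern /Mfun.
have op : open (disk r : set (CC R)).
  have -> : (disk r : set (CC R)) = ball (0 : CC R) (r%:C)%C.
    by apply: funext => w; rewrite /disk /ball /= sub0r normrN.
  exact: ball_open.
have nb : nbhs (z : CC R) (disk r) by apply: open_nbhs_nbhs; split.
rewrite /cdern_mx derive1nS derive1E.
rewrite (@near_eq_derive _ _ _ _ (fun w : CC R => \sum_(m < p) cdern j (f m) w *: A m)); last first.
  by near=> w; apply: IH; near: w.
rewrite -(fct_sumE _ _ (fun m (w : CC R) => cdern j (f m) w *: A m)).
rewrite derive_sum; last first.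
  by move=> m; have [] := deriveZl_mx (A m) (an m j z hz).
apply: eq_bigr => m _.
have [_ ->] := deriveZl_mx (A m) (an m j z hz).
by rewrite /cdern derive1nS derive1E.
Unshelve. all: by end_near.
Qed.
End An.

Unset Implicit Arguments.

Theorem theorem5 (R : realType) (n p : nat) (r : R)
  (f : 'I_p -> R[i] -> R[i]) (A : 'I_p -> 'M[R[i]]_n) (q1 : 'cV[R[i]]_n) :
  0 < r ->
  (forall m, analytic_on (disk r) (f m)) ->
  (forall z, disk r z -> (Mfun f A z)^T = Mfun f A z) ->
  let M_ : nat -> 'M[R[i]]_n := fun j => cdern_mx j (Mfun f A) 0 in
  let fd : 'I_p -> nat -> R[i] := fun m j => cdern j (f m) 0 in
  M_ 0%N \in unitmx ->
  inj_fsupp (Smat M_) ->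
  let Ah := fun x : ivec R[i] n => imul (Smat M_) (imul (Amat M_) x) in
  let Bh := fun x : ivec R[i] n => imul (Smat M_) (imul (Bmat M_) x) in
  let q1v : ivec R[i] n := fun j => if j == 0%N then q1 else 0 in
  (exists q w t om, lanczosI Ah Bh q1v q w t om) /\
  (forall q w t om, lanczosI Ah Bh q1v q w t om ->
   forall k, (1 <= k)%N ->
     [/\ forall j, (k <= j)%N -> q k j = 0,
         \matrix_(a < n, c < k) q k c a 0 = QII M_ fd A q1 k,
         t k k = tII M_ fd A q1 k k,
         t k.-1 k = tII M_ fd A q1 k.-1 k &
         [/\ t k.+1 k = tII M_ fd A q1 k.+1 k & om k = omII M_ fd A q1 k]]).
Proof.
move=> r0 an _ M_ fd hU hS Ah Bh q1v.
have d0 : disk r (0 : R[i]) by rewrite /disk /= normr0 ltcE /= eqxx r0.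
have hM : forall j, M_ j = \sum_(m < p) fd m j *: A m.
  by move=> j; rewrite /M_ /fd (An.M_eq A an j d0).
split.
  exact: (main_exist hM hU q1).
move=> q w t om HL k hk.
exact: (main_uniq hM hU hS HL hk).
Qed.
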